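(* Let $1\le d\le r$ and $0\le k\le d-1$ be integers. Then, componentwise, $g^{1,d}_k\le g^{d,d}_k\le g^{d+1,d}_k\le\cdots\le g^{r,d}_k\le g^{r+1,d}_k$.
   Context: For integers $r\ge0$, $d\ge1$ and $i\in\mathbb Z$, $C(r,d,i)$ denotes the number of integer vectors $(u_1,\dots,u_d)$ with $u_1+\cdots+u_d=i$ and $0\le u_l\le r$ for all $l$. For integers $d\ge1$, $r\ge1$, $k\ge0$: if $0\le k\le r-1$, let $\hat g^{r,d}_k=(g_0,g_1,\dots,g_{\lfloor d/2\rfloor+1})\in\mathbb Z^{\lfloor d/2\rfloor+2}$ with $g_0=C(r-1,d,-k)=\delta_{0,k}$ and $g_i=C(r-1,d,ir-k)-C(r-1,d,(i-1)r-k)$ for $1\le i\le\lfloor d/2\rfloor+1$; if $k\ge r$, $\hat g^{r,d}_k$ is the zero vector. The vector $g^{r,d}_k\in\mathbb Z^{\lfloor d/2\rfloor+1}$ is obtained from $\hat g^{r,d}_k$ by deleting its last entry. (In particular $g^{1,d}_k$ is defined for $r=1$.) *)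

(* Defs.v *)
From HB Require Import structures.
From mathcomp Require Import all_boot all_order all_algebra.
Set Implicit Arguments. Unset Strict Implicit. Unset Printing Implicit Defensive.
Import Order.TTheory GRing.Theory Num.Theory.
Local Open Scope ring_scope.

Definition Ccount (r d : nat) (i : int) : nat :=
  #|[set u : {ffun 'I_d -> 'I_r.+1} | (\sum_(l < d) ((u l : nat)%:Z)) == i]|.

(* Entry i (0 <= i <= floor(d/2)) of the vector g^{r,d}_k (for r >= 1). *)
Definition gvec (r d k : nat) (i : 'I_(d./2).+1) : int :=
  if (k < r)%N then
    if (i : nat) == 0%N then (Ccount r.-1 d (- (k%:Z)))%:Z
    else (Ccount r.-1 d ((i : nat)%:Z * r%:Z - k%:Z))%:Z
         - (Ccount r.-1 d (((i : nat).-1)%:Z * r%:Z - k%:Z))%:Z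
  else 0.

Definition gle {d : nat} (a b : 'I_(d./2).+1 -> int) : Prop :=
  forall i, a i <= b i.
Arguments gvec r d k i : clear implicits.

(* Main.v *)
Require Import Defs.
From mathcomp Require Import all_boot all_order all_algebra zify.
Import Order.TTheory GRing.Theory Num.Theory.
Local Open Scope ring_scope.

Definition PP (q : nat) : {poly int} := \poly_(i < q.+1) 1.
Definition Nq (q D : nat) (x : int) : int := (Ccount q D x)%:Z.

Lemma sumPosz (D : nat) (F : 'I_D -> nat) :
  \sum_(l < D) (F l)%:Z = (\sum_(l < D) F l)%N%:Z.
Proof. by rewrite (big_morph Posz PoszD (erefl (Posz 0))). Qed.

Lemma Nq_nat q D (n : nat) : Nq q D n = (PP q ^+ D)`_n.
Proof.
rewrite /Nq /Ccount.
have -> : PP q ^+ D = \prod_(l < D) \sum_(t < q.+1) 'X^t.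
  rewrite prodr_const card_ord /PP poly_def.
  by congr (_ ^+ _); apply: eq_bigr => t _; rewrite scale1r.
rewrite bigA_distr_bigA /= coef_sum.
under eq_bigr => f _ do rewrite prodrXr coefXn.
rewrite (eq_bigr (fun f : {ffun 'I_D -> 'I_q.+1} => if n == (\sum_(i < D) f i)%N then 1 else 0 : int)); last by move=> f _; case: (_ == _).
rewrite -big_mkcond /= sumr_const natz.
congr (Posz _); rewrite -cardsE; apply: eq_card => f; rewrite !inE sumPosz eqz_nat.
by rewrite eq_sym.
Qed.

Lemma Nq_neg q D x : x < 0 -> Nq q D x = 0.
Proof.
move=> hx; rewrite /Nq /Ccount; apply/eqP; rewrite eqz_nat cards_eq0; apply/eqP.
apply/setP => u; rewrite !inE sumPosz; apply/negbTE; apply/eqP => h.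
by move: hx; rewrite -h.
Qed.

Lemma Nq_int q D x : Nq q D x = if x is Posz n then (PP q ^+ D)`_n else 0.
Proof. by case: x => [n|n]; [rewrite Nq_nat | rewrite Nq_neg]. Qed.

Lemma Nq0 q x : Nq q 0 x = (x == 0)%:Z.
Proof. case: x => [n|n]; rewrite Nq_int /=; last by []. by rewrite expr0 coef1; case: n. Qed.

Lemma Nq_rec q D x : Nq q D.+1 x = \sum_(a < q.+1) Nq q D (x - a%:Z).
Proof.
case: x => [n|n]; last first.
  rewrite Nq_neg // big1 // => a _; apply: Nq_neg; lia.
rewrite Nq_nat exprSr coefMr.
have hM1 : (n.+1 <= n + q.+1)%N by lia.
have hM2 : (q.+1 <= n + q.+1)%N by lia.
rewrite (big_ord_widen (n + q.+1) (fun j => (PP q ^+ D)`_(n - j) * (PP q)`_j)) //.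
rewrite (big_ord_widen (n + q.+1) (fun j : nat => Nq q D (n%:Z - j%:Z))) //.
rewrite big_mkcond [RHS]big_mkcond /=; apply: eq_bigr => j _.
rewrite /PP coef_poly.
case: (ltnP j n.+1) => hj; case: (ltnP j q.+1) => hq //=; rewrite ?mulr1 ?mulr0 //.
  by rewrite subzn // Nq_nat.
by rewrite Nq_neg //; lia.
Qed.

Lemma Nq_zero q D : Nq q D 0 = 1.
Proof.
elim: D => [|D IH]; first by rewrite Nq0.
rewrite Nq_rec big_ord_recl /= subr0 IH big1 ?addr0 // => a _.
by apply: Nq_neg; rewrite /bump /=; lia.
Qed.

Lemma Nq_q0 D x : Nq 0 D x = (x == 0)%:Z.
Proof.
elim: D x => [|D IH] x; first by rewrite Nq0.
by rewrite Nq_rec big_ord1 /= subr0 IH.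
Qed.

Lemma Nq_sym q D x : Nq q D x = Nq q D ((D * q)%N%:Z - x).
Proof.
elim: D x => [|D IH] x.
  by rewrite !Nq0 mul0n sub0r oppr_eq0.
rewrite !Nq_rec (reindex_inj rev_ord_inj) /=; apply: eq_bigr => a _.
rewrite IH; congr Nq; rewrite mulSn; have := ltn_ord a; lia.
Qed.

Definition Dl q D x := Nq q D x - Nq q D (x - 1).

Lemma tel (f : int -> int) x n :
  \sum_(a < n) (f (x - a%:Z) - f (x - a%:Z - 1)) = f x - f (x - n%:Z).
Proof.
elim: n => [|n IH]; first by rewrite big_ord0 subr0 subrr.
rewrite big_ord_recr /= IH; have -> : x - n.+1%:Z = x - n%:Z - 1 by lia.
by rewrite addrA subrK.
Qed.

Lemma Dl_win q D x : Dl q D.+1 x = Nq q D x - Nq q D (x - (q.+1)%:Z).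
Proof.
rewrite /Dl !Nq_rec -sumrB -tel; apply: eq_bigr => a _; congr (_ - Nq _ _ _); lia.
Qed.

Definition isum (f : int -> int) (A : int) (n : nat) := \sum_(t < n) f (A + t%:Z).

Lemma isum_tel f A n : isum (fun y => f y - f (y - 1)) A n = f (A + n%:Z - 1) - f (A - 1).
Proof.
rewrite /isum; elim: n => [|n IH]; first by rewrite big_ord0 addr0 subrr.
rewrite big_ord_recr /= IH.
have -> : A + n.+1%:Z - 1 = A + n%:Z by lia.
by rewrite addrC addrA subrK addrC.
Qed.

Lemma isum_cat f A n1 n2 : isum f A (n1 + n2) = isum f A n1 + isum f (A + n1%:Z) n2.
Proof.
rewrite /isum big_split_ord /=; congr (_ + _); apply: eq_bigr => t _ /=.
congr f; lia.
Qed.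

Lemma isum_le a b A A' (p n e : nat) :
  (forall t, (t < n)%N -> a (A + t%:Z) <= b (A' + p%:Z + t%:Z)) ->
  (forall t, (t < p + n + e)%N -> 0 <= b (A' + t%:Z)) ->
  isum a A n <= isum b A' (p + n + e).
Proof.
move=> hab hb.
rewrite !isum_cat.
have h1 : 0 <= isum b A' p.
  apply: sumr_ge0 => t _; apply: hb; have := ltn_ord t; lia.
have h3 : 0 <= isum b (A' + (p + n)%N%:Z) e.
  apply: sumr_ge0 => t _.
  have -> : A' + (p + n)%N%:Z + t%:Z = A' + (p + n + t)%N%:Z by lia.
  apply: hb; have := ltn_ord t; lia.
have h2 : isum a A n <= isum b (A' + p%:Z) n.
  by apply: ler_sum => t _; apply: hab.
lia.
Qed.

Lemma isum_Dl q D A n : isum (Dl q D) A n = Nq q D (A + n%:Z - 1) - Nq q D (A - 1).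
Proof. exact: (isum_tel (Nq q D)). Qed.

Lemma fold q D x A : A - 1 <= x -> A - 1 <= (D * q)%N%:Z - x ->
  exists n : nat, Nq q D x - Nq q D (A - 1) = isum (Dl q D) A n /\
   (2 * x <= (D * q)%N%:Z -> A + n%:Z - 1 = x) /\
   ((D * q)%N%:Z < 2 * x -> A + n%:Z - 1 = (D * q)%N%:Z - x).
Proof.
move=> h1 h2.
case: (lerP (2 * x) (D * q)%N%:Z) => h.
  exists (absz (x - A + 1)).
  have e : A + (absz (x - A + 1))%:Z - 1 = x by lia.
  split; last by split => //; lia.
  by rewrite isum_Dl e.
exists (absz ((D * q)%N%:Z - x - A + 1)).
have e : A + (absz ((D * q)%N%:Z - x - A + 1))%:Z - 1 = (D * q)%N%:Z - x by lia.
split; last by split => //; lia.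
by rewrite isum_Dl e -Nq_sym.
Qed.

Lemma NN D q x : 2 * x <= (D * q)%N%:Z + 1 -> 0 <= Dl q D x.
Proof.
elim: D x => [|D IH] x hx.
  rewrite /Dl !Nq0; have -> : (x - 1 == 0) = false by apply/eqP; lia.
  by case: (x == 0).
rewrite Dl_win.
rewrite mulSn in hx.
have [n [he [h1 h2]]] := fold q D x (x - q%:Z) ltac:(lia) ltac:(lia).
have -> : x - q.+1%:Z = x - q%:Z - 1 by lia.
rewrite he; apply: sumr_ge0 => t _; apply: IH.
have := ltn_ord t; lia.
Qed.

Lemma G D q x m : 2 * x <= (D * q)%N%:Z + 1 -> (2 * m <= D)%N ->
  Dl q D x <= Dl q.+1 D (x + m%:Z).
Proof.
elim: D q x m => [|D IH] q x m hx hm.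
  have -> : m = 0%N by lia.
  by rewrite addr0 /Dl !Nq0.
rewrite !Dl_win.
rewrite mulSn in hx.
have eDq : (D * q.+1 = D * q + D)%N by rewrite mulnS addnC.
have [n [he [h1 h2]]] := fold q D x (x - q%:Z) ltac:(lia) ltac:(lia).
have [n' [he' [h1' h2']]] := fold q.+1 D (x + m%:Z) (x + m%:Z - q%:Z - 1) ltac:(lia) ltac:(lia).
have -> : x - q.+1%:Z = x - q%:Z - 1 by lia.
have -> : x + m%:Z - q.+2%:Z = x + m%:Z - q%:Z - 1 - 1 by lia.
rewrite he he'.
set p := (m == 0%N) : nat.
have hp : (p = (m == 0%N))%N by [].
rewrite (_ : n' = p + n + (n' - p - n))%N; last first.
  rewrite /p; case: m hx hm he' h1' h2' {p hp} => [|m0] hx hm he' h1' h2' /=; lia.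
apply: isum_le.
  move=> t ht.
  have -> : x + m%:Z - q%:Z - 1 + p%:Z + t%:Z = (x - q%:Z + t%:Z) + (m.-1)%:Z.
    by rewrite /p; case: (m) => [|m0] /=; lia.
  apply: IH; first by rewrite eDq in h1' h2'; lia.
  by case: (m) hm => [|m0] /=; lia.
move=> t ht; apply: NN.
rewrite eDq in h1' h2'.
rewrite /p in ht; case: (m) hm ht h1' h2' => [|m0] hm ht h1' h2' /=; lia.
Qed.

Lemma gvec_pos s d k (i : 'I_(d./2).+1) : (k < s.+1)%N -> (i : nat) != 0%N ->
  gvec s.+1 d k i = Dl s d.+1 ((i : nat)%:Z * s.+1%:Z - k%:Z).
Proof.
move=> hk hi; rewrite /gvec hk (negbTE hi) Dl_win /Nq /=.
congr (_ - Posz (Ccount _ _ _)); move: hi; case: (i : nat) => [|i'] //= _; lia.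
Qed.

Lemma gvec_zero s d k (i : 'I_(d./2).+1) : (k < s.+1)%N -> (i : nat) = 0%N ->
  gvec s.+1 d k i = (k == 0%N)%:Z.
Proof.
move=> hk hi; rewrite /gvec hk hi eqxx /=.
have -> : (Ccount s d (- k%:Z))%:Z = Nq s d (- k%:Z) by [].
case: k hk => [|k] hk /=; first by rewrite oppr0 Nq_zero.
by rewrite Nq_neg.
Qed.

Theorem mainTheorem9 (d r k : nat) :
  (1 <= d)%N -> (d <= r)%N -> (k <= d - 1)%N ->
  @gle d (gvec 1 d k) (gvec d d k) /\
  (forall s : nat, (d <= s <= r)%N -> @gle d (gvec s d k) (gvec s.+1 d k)).
Proof.
move=> hd hdr hk.
case: d hd hdr hk => [|d] // _ hdr hk.
have hkd : (k < d.+1)%N by lia.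
split.
  move=> i.
  have hi2 : ((i : nat).*2 <= d.+1)%N by rewrite -geq_half_double -ltnS.
  case: (eqVneq (i : nat) 0%N) => hi.
    rewrite (gvec_zero d d.+1 k i hkd hi).
    case: k hk hkd => [|k] hk hkd; first by rewrite (gvec_zero 0 d.+1 0 i _ hi).
    by rewrite /gvec.
  rewrite (gvec_pos d d.+1 k i hkd hi).
  have h0 : 0 <= Dl d d.+2 ((i : nat)%:Z * d.+1%:Z - k%:Z).
    apply: NN; nia.
  case: k hk hkd h0 => [|k] hk hkd h0; last by rewrite /gvec.
  rewrite (gvec_pos 0 d.+1 0 i _ hi) // /Dl !Nq_q0.
  have -> : ((i : nat)%:Z * 1%:Z - 0%:Z == 0) = false by apply/eqP; move: hi; lia.
  apply: le_trans h0; case: (_ == 0) => //.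
move=> s /andP [hs1 hs2] i.
case: s hs1 hs2 => [|s] hs1 hs2; first by lia.
have hi2 : ((i : nat).*2 <= d.+1)%N by rewrite -geq_half_double -ltnS.
have hks : (k < s.+1)%N by lia.
have hks' : (k < s.+2)%N by lia.
case: (eqVneq (i : nat) 0%N) => hi.
  by rewrite (gvec_zero s d.+1 k i hks hi) (gvec_zero s.+1 d.+1 k i hks' hi).
rewrite (gvec_pos s d.+1 k i hks hi) (gvec_pos s.+1 d.+1 k i hks' hi).
have -> : (i : nat)%:Z * s.+2%:Z - k%:Z = ((i : nat)%:Z * s.+1%:Z - k%:Z) + (i : nat)%:Z by lia.
apply: G; nia.
Qed.
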